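(* Let $\mathbf{D}^*=[\mathbf{d}^*_1,\dots,\mathbf{d}^*_n]\in\mathbb{R}^{d\times n}$ be column-orthogonal and let $\mathbf{x}=\mathbf{D}^*\boldsymbol{\beta}$, where $\boldsymbol{\beta}\in\mathbb{R}^n$ has support $S^*$ with $|S^*|=k$ and non-zero entries satisfying $\gamma\le|\beta_i|\le\Gamma$ for $0<\gamma\le\Gamma$. Let $\rho>0$ with $2\rho<\frac{\gamma}{4\sqrt{k}\Gamma}$. Then for any $\mathbf{D}=[\mathbf{d}_1,\dots,\mathbf{d}_n]\in\mathbb{R}^{d\times n}$ with $\|\mathbf{D}-\mathbf{D}^*\|_{1,2}\le2\rho$, $$S=\arg\max_{T\subseteq[n],|T|\le k}\sum_{i\in T}|\langle\mathbf{d}_i,\mathbf{x}\rangle|=S^*.$$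
   Context: Column-orthogonal means $\mathbf{A}^\top\mathbf{A}=\mathbf{I}$; $\|\mathbf{A}\|_{1,2}$ is the maximum Euclidean norm of the columns of $\mathbf{A}$. *)

(* Defs.v *)
From mathcomp Require Import all_boot all_order all_algebra.
Set Implicit Arguments. Unset Strict Implicit. Unset Printing Implicit Defensive.
Import Order.TTheory GRing.Theory Num.Theory.
Local Open Scope ring_scope.

Definition col_norm (R : rcfType) (m n : nat) (A : 'M[R]_(m, n)) (j : 'I_n) : R :=
  Num.sqrt (\sum_(i < m) A i j ^+ 2).

(* ||A||_{1,2} : maximum Euclidean norm of the columns of A (0 if n = 0) *)
Definition norm12 (R : rcfType) (m n : nat) (A : 'M[R]_(m, n)) : R :=
  \big[Num.max/0]_(j < n) col_norm A j.

Definition col_orthogonal (R : rcfType) (m n : nat) (A : 'M[R]_(m, n)) : Prop :=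
  A^T *m A = 1%:M.

Definition supp (R : rcfType) (n : nat) (b : 'cV[R]_n) : {set 'I_n} :=
  [set i | b i 0 != 0].

Definition inner_col (R : rcfType) (m n : nat) (D : 'M[R]_(m, n)) (x : 'cV[R]_m)
    (i : 'I_n) : R :=
  \sum_(r < m) D r i * x r 0.

Definition score (R : rcfType) (m n : nat) (D : 'M[R]_(m, n)) (x : 'cV[R]_m)
    (T : {set 'I_n}) : R :=
  \sum_(i in T) `|inner_col D x i|.

Definition is_argmax (R : rcfType) (m n : nat) (k : nat) (D : 'M[R]_(m, n))
    (x : 'cV[R]_m) (T : {set 'I_n}) : Prop :=
  (#|T| <= k)%N /\
  forall T' : {set 'I_n}, (#|T'| <= k)%N -> score D x T' <= score D x T.

(* Main.v *)
Require Import Defs.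
From mathcomp Require Import all_boot all_order all_algebra.
From mathcomp Require Import zify ring lra.
Import Order.TTheory GRing.Theory Num.Theory.
Local Open Scope ring_scope.

Lemma comb_lt (R : rcfType) n (a : 'I_n -> R) (c : R) (S T : {set 'I_n}) :
  0 <= c -> (forall i, i \in S -> c < a i) -> (forall i, i \notin S -> a i < c) ->
  (#|T| <= #|S|)%N -> T != S -> \sum_(i in T) a i < \sum_(i in S) a i.
Proof.
move=> c0 hS hN hc hne.
rewrite (big_setID (A:=T) S) (big_setID (A:=S) T) /= setIC ltrD2l.
have hcard : (#|T :\: S| <= #|S :\: T|)%N.
  have := cardsID S T; have := cardsID T S; rewrite setIC; lia.
have hne0 : S :\: T != set0.
  apply/negP => /eqP h0; move: h0 => /eqP; rewrite setD_eq0 => sub.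
  by move: hne; rewrite eq_sym eqEcard sub hc.
apply: (@le_lt_trans _ _ (\sum_(i in T :\: S) c)).
  apply: ler_sum => i; rewrite inE => /andP[iS _]; exact/ltW/hN.
apply: (@le_lt_trans _ _ (\sum_(i in S :\: T) c)).
  by rewrite !sumr_const; apply: ler_wpMn2l.
apply: ltr_sum.
  case/set0Pn: hne0 => j hj; apply/hasP; exists j => //; exact: mem_index_enum.
by move=> i; rewrite inE => /andP[_ iS]; apply: hS.
Qed.

Arguments comb_lt {R n a c S T}.

Lemma CS (R : rcfType) m (u v : 'I_m -> R) :
  (\sum_i u i * v i) ^+ 2 <= (\sum_i u i ^+ 2) * (\sum_i v i ^+ 2).
Proof.
have h0 : 0 <= \sum_i \sum_j (u i * v j - u j * v i) ^+ 2.
  by apply: sumr_ge0 => i _; apply: sumr_ge0 => j _; apply: sqr_ge0.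
have E : \sum_i \sum_j (u i * v j - u j * v i) ^+ 2 =
   \sum_i \sum_j (u i ^+ 2 * v j ^+ 2) + \sum_i \sum_j (u j ^+ 2 * v i ^+ 2)
   - 2 * \sum_i \sum_j ((u i * v i) * (u j * v j)).
  rewrite mulr_sumr -!big_split -sumrB; apply: eq_bigr => i _.
  rewrite mulr_sumr -!big_split -sumrB; apply: eq_bigr => j _ /=; ring.
have E2 : \sum_i \sum_j (u j ^+ 2 * v i ^+ 2) = \sum_i \sum_j (u i ^+ 2 * v j ^+ 2).
  by rewrite exchange_big.
rewrite E2 in E.
rewrite -!big_distrlr /= mulrC -expr2 in E.
rewrite E in h0; lra.
Qed.

Arguments CS {R m} u v.

Theorem lemmaC4 (R : rcfType) (d n k : nat) (Dstar : 'M[R]_(d, n))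
  (beta : 'cV[R]_n) (Sstar : {set 'I_n}) (gamma Gamma rho : R) :
  col_orthogonal Dstar ->
  supp beta = Sstar -> #|Sstar| = k ->
  0 < gamma -> gamma <= Gamma ->
  (forall i : 'I_n, i \in Sstar -> gamma <= `|beta i 0| <= Gamma) ->
  0 < rho ->
  2 * rho < gamma / (4 * Num.sqrt (k%:R) * Gamma) ->
  forall D : 'M[R]_(d, n), norm12 (D - Dstar) <= 2 * rho ->
  forall T : {set 'I_n}, is_argmax k D (Dstar *m beta) T <-> T = Sstar.
Proof.
move=> Horth Hsupp Hk Hg HgG Hb Hr Hrho D HD T.
set x := Dstar *m beta.
set E := D - Dstar.
have HG : 0 < Gamma by apply: lt_le_trans HgG.
have Hk0 : (0 < k)%N.
  case: k Hk Hrho => // _ ; rewrite sqrtr0 mulr0 mul0r invr0 mulr0; lra.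
have Hsk : 0 < Num.sqrt (k%:R : R) by rewrite sqrtr_gt0 ltr0n.
have Hinner : forall i, inner_col D x i = beta i 0 + \sum_r E r i * x r 0.
  move=> i.
  have h : (Dstar^T *m x) i 0 = beta i 0 by rewrite /x mulmxA Horth mul1mx.
  rewrite -h mxE /inner_col -big_split; apply: eq_bigr => r _ /=.
  rewrite !mxE; ring.
have Hx2 : \sum_r x r 0 ^+ 2 = \sum_j beta j 0 ^+ 2.
  have h : (x^T *m x) 0 0 = (beta^T *m beta) 0 0.
    by rewrite /x trmx_mul mulmxA -(mulmxA beta^T) Horth mulmx1.
  have h1 : (x^T *m x) 0 0 = \sum_r x r 0 ^+ 2.
    by rewrite mxE; apply: eq_bigr => r _; rewrite expr2 [x^T _ _]mxE.
  have h2 : (beta^T *m beta) 0 0 = \sum_j beta j 0 ^+ 2.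
    by rewrite mxE; apply: eq_bigr => r _; rewrite expr2 [beta^T _ _]mxE.
  by rewrite -h1 -h2 h.
have Hb2 : \sum_j beta j 0 ^+ 2 <= k%:R * Gamma ^+ 2.
  apply: (@le_trans _ _ (\sum_j (if j \in Sstar then Gamma ^+ 2 else 0))).
    apply: ler_sum => j _; case: ifP => jS.
      have /andP[h1 h2] := Hb j jS.
      rewrite -[beta j 0 ^+ 2]ger0_norm ?sqr_ge0 // normrX.
      have := normr_ge0 (beta j 0); nra.
    move: jS; rewrite -Hsupp inE => /negbT; rewrite negbK => /eqP ->.
    by rewrite expr0n.
  by rewrite -big_mkcond /= sumr_const Hk mulr_natl.
have key : forall i, `|inner_col D x i - beta i 0| < gamma / 4.
  move=> i; rewrite Hinner addrAC subrr add0r.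
  have cs := CS (fun r => E r i) (fun r => x r 0).
  have hA : Num.sqrt (\sum_r E r i ^+ 2) <= 2 * rho.
    apply: le_trans HD; rewrite /norm12.
    exact: (le_bigmax _ (fun j => col_norm E j) i).
  have hB : Num.sqrt (\sum_r x r 0 ^+ 2) <= Num.sqrt (k%:R) * Gamma.
    rewrite Hx2 -(ger0_norm (ltW HG)) -sqrtr_sqr -sqrtrM ?ler0n //.
    by rewrite ler_wsqrtr // normrX.
  have hC : `|\sum_r E r i * x r 0| <= Num.sqrt (\sum_r E r i ^+ 2) * Num.sqrt (\sum_r x r 0 ^+ 2).
    rewrite -sqrtr_sqr -sqrtrM; first by rewrite ler_wsqrtr.
    by apply: sumr_ge0 => r _; apply: sqr_ge0.
  have hpos : 0 < 4 * Num.sqrt (k%:R : R) * Gamma by rewrite !mulr_gt0.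
  move: Hrho; rewrite ltr_pdivlMr // => Hrho.
  have hA0 : 0 <= Num.sqrt (\sum_r E r i ^+ 2) by apply: sqrtr_ge0.
  have hB0 : 0 <= Num.sqrt (\sum_r x r 0 ^+ 2) by apply: sqrtr_ge0.
  apply: (le_lt_trans hC).
  apply: (@le_lt_trans _ _ (2 * rho * (Num.sqrt (k%:R) * Gamma))).
    by apply: ler_pM.
  nra.
set a := fun i => `|inner_col D x i|.
have hS : forall i, i \in Sstar -> gamma / 2 < a i.
  move=> i iS; have /andP[h1 _] := Hb i iS; have := key i.
  have := ler_normB (inner_col D x i) (inner_col D x i - beta i 0).
  rewrite opprB addrC subrK /a; lra.
have hN : forall i, i \notin Sstar -> a i < gamma / 2.
  move=> i; rewrite -Hsupp inE negbK => /eqP h0; have := key i.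
  by rewrite /a h0 subr0; lra.
have hc : 0 <= gamma / 2 by lra.
have comb := fun T => @comb_lt _ _ a _ _ T hc hS hN.
split.
- case=> HT Hmax; apply/eqP; apply/negPn/negP => hne.
  have hlt := comb T (leq_trans HT (eq_leq (esym Hk))) hne.
  have := Hmax Sstar; rewrite Hk leqnn => /(_ isT).
  rewrite /score; move: hlt; rewrite /a; lra.
- move=> ->; split; first by rewrite Hk.
  move=> T' HT'; case: (eqVneq T' Sstar) => [->|ne]; first exact: lexx.
  apply: ltW; apply: comb; by rewrite ?Hk.
Qed.
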